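(* Let $G$ be a graph with minimum degree $\delta(G)$, and let $m$ be a positive integer with $m > \frac{\chi_\rho(G)}{\delta(G)}$ (so in particular $\delta(G)\ge 1$). Then $\chi_\rho(FSSD_m(G)) = \chi_\rho(FSSD_{m+1}(G))$.
   Context: All graphs are finite and simple. For a positive integer $i$, an $i$-packing in a graph is a set of vertices any two distinct members of which are at distance greater than $i$. The packing chromatic number $\chi_\rho(H)$ of a graph $H$ is the smallest integer $k$ such that $V(H)$ can be partitioned into sets $V_1,\dots,V_k$ with each $V_i$ an $i$-packing. For a positive integer $m$, $FSSD_m(G)$ is obtained from $G$ by replacing each edge $uv$ of $G$ by a copy of $K_{2,m}$: the edge $uv$ is deleted and $m$ new vertices are added, each adjacent to exactly $u$ and $v$. *)

(* Defs.v *)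
From mathcomp Require Import all_boot.
Set Implicit Arguments. Unset Strict Implicit. Unset Printing Implicit Defensive.

(* A finite simple graph: vertex type T : finType, adjacency e : rel T,
   assumed symmetric and irreflexive (as hypotheses of the theorem). *)

Section Graph.
Variables (T : finType) (e : rel T).

Fixpoint ball (i : nat) (u : T) : {set T} :=
  if i is i'.+1 then ball i' u :|: [set y | [exists x in ball i' u, e x y]]
  else [set u].

Definition packing (i : nat) (A : {set T}) : bool :=
  [forall u in A, forall v in A, (u != v) ==> (v \notin ball i u)].

(* V(G) partitions into V_1, ..., V_k with V_i an i-packing;
   color j : 'I_k stands for the class V_(j+1). *)
Definition packing_colorable (k : nat) : bool :=
  [exists f : {ffun T -> 'I_k},
     [forall j : 'I_k, packing j.+1 [set x | f x == j]]].

Lemma packing_colorable_exists : exists k, packing_colorable k.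
Proof.
exists #|T|; apply/existsP; exists [ffun x => enum_rank x].
apply/forallP => j; apply/forallP => u; apply/implyP; rewrite inE ffunE => /eqP hu.
apply/forallP => v; apply/implyP; rewrite inE ffunE => /eqP hv.
apply/implyP => huv; exfalso; move/negP: huv; apply.
by apply/eqP; apply: enum_rank_inj; rewrite hu hv.
Qed.

Definition packing_chromatic_number : nat := ex_minn packing_colorable_exists.

(* minimum degree (for an empty vertex set this is #|T| = 0) *)
Definition min_degree : nat := \big[minn/#|T|]_(x : T) #|[set y | e x y]|.

(* FSSD_m(G): each edge uv (stored once, as the pair (u,v) with
   enum_rank u < enum_rank v) is replaced by m new vertices adjacent to u and v. *)
Definition fssd_edge : pred (T * T) :=
  [pred p | e p.1 p.2 && (enum_rank p.1 < enum_rank p.2)].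

Definition fssd_vertex (m : nat) : finType :=
  (T + ({p : T * T | fssd_edge p} * 'I_m))%type.

Definition fssd_adj (m : nat) : rel (fssd_vertex m) :=
  fun a b =>
    match a, b with
    | inl u, inr (p, _) => (u == (val p).1) || (u == (val p).2)
    | inr (p, _), inl u => (u == (val p).1) || (u == (val p).2)
    | _, _ => false
    end.

End Graph.

(* Main.v *)
Require Import Defs.
From mathcomp Require Import all_boot zify.
Set Implicit Arguments. Unset Strict Implicit. Unset Printing Implicit Defensive.

Section Gen.
Variables (T : finType) (e : rel T).

Lemma ballS i u x : x \in ball e i u -> x \in ball e i.+1 u.
Proof. by move=> h /=; rewrite inE h. Qed.

Lemma ball_mono i j u x : i <= j -> x \in ball e i u -> x \in ball e j u.
Proof.
move=> /subnK <-; elim: (j - i) => [|n IH] //= h.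
by rewrite inE IH.
Qed.

Lemma ball_step i u x y : x \in ball e i u -> e x y -> y \in ball e i.+1 u.
Proof. by move=> hx hxy /=; rewrite !inE; apply/orP; right; apply/existsP; exists x; rewrite hx. Qed.

Lemma ball_center i u : u \in ball e i u.
Proof. elim: i => [|i IH] /=; first by rewrite inE. by rewrite inE IH. Qed.

Lemma ball1 u y : y \in ball e 1 u -> (y == u) || e u y.
Proof.
rewrite /= !inE => /orP [->//|/existsP [x /andP [hx hxy]]].
by move: hx hxy; rewrite inE => /eqP -> ->; rewrite orbT.
Qed.

Lemma ballSP i u y : y \in ball e i.+1 u ->
  y \in ball e i u \/ exists2 x, x \in ball e i u & e x y.
Proof.
rewrite /= !inE => /orP [->|/existsP [x /andP [hx hxy]]]; first by left.
by right; exists x.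
Qed.

Lemma packingP i (A : {set T}) :
  reflect (forall u v, u \in A -> v \in A -> u != v -> v \notin ball e i u) (packing e i A).
Proof.
apply: (iffP forallP) => h.
  move=> u v hu hv huv; move: (h u); rewrite hu /= => /forallP /(_ v).
  by rewrite hv huv.
move=> u; apply/implyP => hu; apply/forallP => v; apply/implyP => hv.
by apply/implyP; apply: h.
Qed.

Lemma pcn_colorable : packing_colorable e (packing_chromatic_number e).
Proof. by rewrite /packing_chromatic_number; case: ex_minnP. Qed.

Lemma pcn_min k : packing_colorable e k -> packing_chromatic_number e <= k.
Proof. by rewrite /packing_chromatic_number; case: ex_minnP => n _ h /h. Qed.

Lemma min_degree_le x : min_degree e <= #|[set y | e x y]|.
Proof.
rewrite /min_degree; have : x \in index_enum T by rewrite mem_index_enum.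
elim: (index_enum T) => [//|a r IH]; rewrite inE big_cons => /orP [/eqP <-|/IH h].
  exact: geq_minl.
by rewrite geq_min h orbT.
Qed.

Lemma min_degree_card : min_degree e <= #|T|.
Proof.
rewrite /min_degree; apply: (big_ind (fun n => n <= #|T|)) => //.
  by move=> a b ha _; rewrite geq_min ha.
by move=> x _; apply: max_card.
Qed.

End Gen.

Lemma ball_hom (T1 T2 : finType) (e1 : rel T1) (e2 : rel T2) (f : T1 -> T2)
  (hf : forall x y, e1 x y -> e2 (f x) (f y)) i a x :
  x \in ball e1 i a -> f x \in ball e2 i (f a).
Proof.
elim: i x => [|i IH] x.
  by rewrite /= !inE => /eqP ->.
case/ballSP => [/IH /ballS //| [y /IH hy hyx]].
exact: ball_step hy (hf _ _ hyx).
Qed.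

Lemma colorable_hom (T1 T2 : finType) (e1 : rel T1) (e2 : rel T2) (f : T1 -> T2)
  (finj : injective f) (hf : forall x y, e1 x y -> e2 (f x) (f y)) k :
  packing_colorable e2 k -> packing_colorable e1 k.
Proof.
case/existsP => g /forallP hg; apply/existsP; exists [ffun x => g (f x)].
apply/forallP => j; apply/packingP => u v hu hv huv; rewrite !inE !ffunE in hu hv.
have hu' : f u \in [set x0 | g x0 == j] by rewrite inE.
have hv' : f v \in [set x0 | g x0 == j] by rewrite inE.
have := packingP _ _ _ (hg j) _ _ hu' hv'.
rewrite (inj_eq finj) => /(_ huv); apply: contra.
exact: (@ball_hom _ _ _ _ _ hf j.+1 u v).
Qed.

Lemma colP (T : finType) (e : rel T) k (f : {ffun T -> 'I_k}) :
  (forall j : 'I_k, packing e j.+1 [set x | f x == j]) ->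
  forall a b, f a = f b -> a != b -> b \notin ball e (f a).+1 a.
Proof.
move=> hf a b hab ne.
have ha : a \in [set x | f x == f a] by rewrite inE.
have hb : b \in [set x | f x == f a] by rewrite inE hab.
exact: (packingP _ _ _ (hf (f a)) _ _ ha hb ne).
Qed.

Lemma colorableP (T : finType) (e : rel T) k : packing_colorable e k ->
  exists f : {ffun T -> 'I_k}, forall j : 'I_k, packing e j.+1 [set x | f x == j].
Proof. by case/existsP => f /forallP h; exists f. Qed.

Section Fssd.
Variables (T : finType) (e : rel T) (e_sym : symmetric e) (e_irr : irreflexive e).

Lemma fssd_dist m u n (x : fssd_vertex e m) :
  x \in ball (@fssd_adj T e m) n (inl u) ->
  match x with
  | inl v => v \in ball e n./2 u
  | inr (p, _) => (0 < n) && (((val p).1 \in ball e n.-1./2 u) || ((val p).2 \in ball e n.-1./2 u))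
  end.
Proof.
elim: n x => [|n IH] x.
  by rewrite /= inE => /eqP ->; rewrite inE.
case/ballSP => [/IH hx|[y /IH hy hyx]].
  case: x hx => [v|[p i]].
    by apply: ball_mono; apply: half_leq.
  case/andP => n0 /orP [h|h]; apply/andP; split => //; apply/orP; [left|right];
  by apply: (ball_mono _ h); apply: half_leq; apply: leq_pred.
case: x y hy hyx => [v|[p i]] [w|[q j]] //=.
  case/andP; case: n IH => [//|n] _ _ /= hq hv.
  have he : e (val q).1 (val q).2 by case: q {hv} hq => [[a b]] /= /andP [].
  case/orP: hq => hq; case/orP: hv => /eqP ->.
  - by apply: ballS.
  - exact: ball_step hq he.
  - by apply: ball_step hq _; rewrite e_sym.
  - by apply: ballS.
by move=> hw /orP [] /eqP <-; rewrite /= hw ?orbT.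
Qed.

Lemma fssd_from_G m k : packing_colorable e k -> packing_colorable (@fssd_adj T e m) k.+1.
Proof.
case/colorableP => c hc; apply/existsP.
exists [ffun x : fssd_vertex e m => match x with inl u => lift ord0 (c u) | inr _ => ord0 end].
apply/forallP => j; apply/packingP => a b ha hb hab.
rewrite !inE !ffunE in ha hb.
case: a b ha hb hab => [u|[p i]] [v|[q l]] ha hb hab.
- move/eqP: hb; move/eqP: ha => <- /lift_inj huv.
  have nuv : u != v by apply: contra hab => /eqP ->.
  have := colP hc (esym huv) nuv; apply: contra => /fssd_dist.
  move=> h; apply: (ball_mono _ h).
  rewrite lift0 leq_half_double -addnn; lia.
- by move/eqP: hb; move/eqP: ha => <- /(congr1 val); rewrite lift0.
- by move/eqP: hb; move/eqP: ha => <- /(congr1 (@nat_of_ord _)); rewrite lift0.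
- move/eqP: ha => ha; subst j; apply/negP => /ball1 /orP [/eqP h|//].
  by rewrite h eqxx in hab.
Qed.

End Fssd.

Section Key.
Variables (T : finType) (e : rel T) (e_sym : symmetric e) (e_irr : irreflexive e).

Definition ordp (u y : T) : T * T := if enum_rank u < enum_rank y then (u, y) else (y, u).

Lemma ordp_edge u y : e u y -> fssd_edge e (ordp u y).
Proof.
move=> he; rewrite /ordp /fssd_edge; case: ifP => h; rewrite /= ?he ?h //.
rewrite e_sym he /= ltn_neqAle leqNgt h andbT.
apply: contraTneq he => /val_inj/enum_rank_inj ->; by rewrite e_irr.
Qed.

Variable (m : nat).

Definition hmap (u : T) (z : T * 'I_m) : fssd_vertex e m :=
  match insub (ordp u z.1) with Some p => inr (p, z.2) | None => inl u end.

Lemma hmapE u z : e u z.1 ->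
  exists p : {p | fssd_edge e p}, hmap u z = inr (p, z.2) /\ val p = ordp u z.1.
Proof.
move=> he; rewrite /hmap; case: insubP => [p _ hp|]; first by exists p.
by rewrite ordp_edge.
Qed.

Lemma hmap_adj u z : e u z.1 -> @fssd_adj T e m (inl u) (hmap u z).
Proof.
move=> he; have [p [-> hp]] := hmapE he; rewrite /= hp /ordp.
by case: ifP => _ /=; rewrite eqxx ?orbT.
Qed.

Lemma hmap_inj u z1 z2 : e u z1.1 -> e u z2.1 -> hmap u z1 = hmap u z2 -> z1 = z2.
Proof.
move=> h1 h2; have [p1 [-> hp1]] := hmapE h1; have [p2 [-> hp2]] := hmapE h2.
case=> ep ei; subst p2; move: hp1 hp2 h1 h2; case: z1 ei => [y1 i1]; case: z2 => [y2 i2] /= -> ->.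
rewrite /ordp; case: ifP => _; case: ifP => _; case=> *; subst => //; by rewrite e_irr.
Qed.

Lemma key k (f : {ffun fssd_vertex e m -> 'I_k}) u :
  (forall j : 'I_k, packing (@fssd_adj T e m) j.+1 [set x | f x == j]) ->
  nat_of_ord (f (inl u)) = 0 ->
  #|[set y | e u y]| * m < k.
Proof.
move=> hf f0.
pose S := setX [set y | e u y] [set: 'I_m].
have cS : #|S| = #|[set y | e u y]| * m by rewrite cardsX cardsT card_ord.
have hS z : z \in S -> e u z.1 by rewrite !inE => /andP [].
have sym a b : @fssd_adj T e m a b = @fssd_adj T e m b a.
  by case: a => [?|[? ?]]; case: b => [?|[? ?]].
have nz z : z \in S -> f (hmap u z) != f (inl u).
  move=> /hS hz; apply/negP => /eqP h.
  have ne : inl u != hmap u z.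
    by have [p [-> _]] := hmapE hz.
  have := colP hf (esym h) ne; rewrite f0; apply/negP; rewrite negbK.
  by apply: (@ball_step _ _ 0 _ (inl u)); rewrite ?inE // hmap_adj.
have inj : {in S &, injective (fun z => f (hmap u z))}.
  move=> z1 z2 hz1 hz2 /= h; apply/eqP; apply/negP => /negP ne.
  have ne' : hmap u z1 != hmap u z2.
    by apply: contra ne => /eqP /(hmap_inj (hS _ hz1) (hS _ hz2)) ->.
  have := colP hf h ne'; apply/negP; rewrite negbK.
  have hpos : 0 < f (hmap u z1).
    by rewrite lt0n; apply: contra (nz _ hz1) => /eqP h0; apply/eqP/val_inj; rewrite /= h0 f0.
  apply: (@ball_mono _ _ 2); first by [].
  apply: (@ball_step _ _ 1 _ (inl u)); last exact: hmap_adj (hS _ hz2).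
  by apply: (@ball_step _ _ 0 _ (hmap u z1)); rewrite ?inE // sym hmap_adj // hS.
rewrite -cS -(card_in_imset inj).
have : [set f (hmap u z) | z in S] \proper [set: 'I_k].
  rewrite properT; apply/negP => /eqP hT.
  have : f (inl u) \in [set f (hmap u z) | z in S] by rewrite hT inE.
  by case/imsetP => z hz /esym/eqP; rewrite (negbTE (nz _ hz)).
by move/proper_card; rewrite cardsT card_ord.
Qed.

End Key.

Theorem proposition5 (T : finType) (e : rel T)
    (e_sym : symmetric e) (e_irr : irreflexive e) (m : nat) :
  0 < m ->
  packing_chromatic_number e < m * min_degree e ->
  packing_chromatic_number (@fssd_adj T e m)
  = packing_chromatic_number (@fssd_adj T e m.+1).
Proof.
move=> m0 hlt.
apply/eqP; rewrite eqn_leq; apply/andP; split.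
  apply: pcn_min.
  pose phi (x : fssd_vertex e m) : fssd_vertex e m.+1 :=
    match x with inl u => inl u | inr (p, i) => inr (p, widen_ord (leqnSn m) i) end.
  apply: (@colorable_hom _ _ _ _ phi); last exact: pcn_colorable.
    move=> [u|[p i]] [v|[q j]] //=; first by case=> ->.
    by case=> -> /val_inj ->.
  by move=> [u|[p i]] [v|[q j]].
set k := packing_chromatic_number (@fssd_adj T e m).
have [f hf] := colorableP (pcn_colorable (@fssd_adj T e m)).
rewrite -/k in f hf *.
have hk : k <= (packing_chromatic_number e).+1.
  by apply: pcn_min; apply: fssd_from_G => //; apply: pcn_colorable.
have hT : 0 < #|T|.
  apply: leq_trans (min_degree_card e); rewrite lt0n; apply/negP => /eqP h0.
  by rewrite h0 muln0 in hlt.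
have [u0 _] := card_gt0P hT.
have k0 : 0 < k by apply: leq_ltn_trans (leq0n _) (ltn_ord (f (inl u0))).
have hno1 u : nat_of_ord (f (inl u)) != 0.
  apply/negP => /eqP h0; have := key e_sym e_irr hf h0.
  have := min_degree_le e u; move: hk hlt; set a := min_degree e; set b := #|_|.
  move=> hk hlt hab hbk.
  have : m * a <= m * b by rewrite leq_mul2l hab orbT.
  rewrite mulnC in hbk; lia.
apply: pcn_min; apply/existsP.
exists [ffun x : fssd_vertex e m.+1 => match x with inl v => f (inl v) | inr _ => Ordinal k0 end].
pose psi (x : fssd_vertex e m.+1) : fssd_vertex e m :=
  match x with inl u => inl u | inr (p, i) => inr (p, Ordinal (ltn_pmod i m0)) end.
have hpsi x y : @fssd_adj T e m.+1 x y -> @fssd_adj T e m (psi x) (psi y).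
  by case: x => [?|[? ?]]; case: y => [?|[? ?]].
apply/forallP => j; apply/packingP => a b ha hb hab.
rewrite !inE !ffunE in ha hb.
case: a b ha hb hab => [u|[p i]] [v|[q l]] ha hb hab.
- move/eqP: hb; move/eqP: ha => <- huv.
  have nuv : inl u != inl v :> fssd_vertex e m by apply: contra hab => /eqP [->].
  have := colP hf (esym huv) nuv; apply: contra => h.
  exact: (@ball_hom _ _ _ _ psi hpsi _ (inl u) (inl v) h).
- move/eqP: hb; move/eqP: ha => <- /(f_equal val) /= h.
  by move: (hno1 u); rewrite -h.
- move/eqP: hb; move/eqP: ha => <- /(f_equal val) /= h.
  by move: (hno1 v); rewrite h.
- move/eqP: ha => ha; subst j; apply/negP => /ball1 /orP [/eqP h|//].
  by rewrite h eqxx in hab.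
Qed.
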